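(* The Lie algebra $\Lambda(\mathbb{Q}\mathrm{Par})$ is not finitely generated.
   Context: The nonsymmetric operad of partitions $\mathrm{Par}$: $\mathrm{Par}((1))=\{1\}$, and for $m\ge2$, $\mathrm{Par}((m))$ is the set of monomials $\prod_{i=1}^Nx_i^{a_i}$ with $N\ge2$, all $a_i\ge1$, $\sum a_i=m$ (nontrivial order-preserving partitions of $\{1,\dots,m\}$ into consecutive blocks). Partial composition: if $a_1+\dots+a_{l-1}+1\le s\le a_1+\dots+a_l$, then $\left(\prod_{i=1}^Nx_i^{a_i}\right)\circ_s\left(\prod_{k=1}^{N_s}x_k^{b_k}\right)=x_l^{a_l-1+\sum_kb_k}\prod_{i\ne l}x_i^{a_i}$; $1$ is a two-sided unit. $\Lambda(\mathbb{Q}\mathrm{Par})=\bigoplus_{m\ge1}\mathbb{Q}\mathrm{Par}((m))$ with Lie bracket $[c,d]=\sum_{t=1}^{j}d\circ_tc-\sum_{s=1}^{k}c\circ_sd$ for $c\in\mathrm{Par}((k))$, $d\in\mathrm{Par}((j))$, extended bilinearly. *)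

(* Defs.v *)
From HB Require Import structures.
From mathcomp Require Import all_boot all_algebra.
From mathcomp Require Import finmap.
From mathcomp Require monalg.
Import monalg.

Set Implicit Arguments.
Unset Strict Implicit.
Unset Printing Implicit Defensive.

Import GRing.Theory.
Local Open Scope ring_scope.

(* A monomial prod_{i=1}^N x_i^{a_i} is encoded by its exponent sequence
   [:: a_1; ...; a_N].  The unit 1 of Par((1)) is encoded by [:: 1]. *)
Definition par_valid (a : seq nat) : bool :=
  (a == [:: 1%N]) || ((1 < size a)%N && all (fun x => 0 < x)%N a).

Definition Par := {a : seq nat | par_valid a}.
HB.instance Definition _ := [isSub for (@sval (seq nat) (fun a => par_valid a))].
HB.instance Definition _ := [Choice of Par by <:].

Definition par_unit : Par := exist _ [:: 1%N] (erefl true).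

Definition arity (c : Par) : nat := sumn (val c).

(* replace the exponent a_l of the block containing position s (1-based)
   by a_l - 1 + j *)
Fixpoint ins_block (a : seq nat) (s j : nat) : seq nat :=
  match a with
  | [::] => [::]
  | x :: a' => if (s <= x)%N then (x - 1 + j)%N :: a' else x :: ins_block a' (s - x) j
  end.

(* partial composition on exponent sequences; 1 is a two-sided unit *)
Definition pcomp_seq (c : seq nat) (s : nat) (d : seq nat) : seq nat :=
  if c == [:: 1%N] then d else ins_block c s (sumn d).

(* partial composition c o_s d in Par (s ranging over 1..arity c); the result
   is always valid for 1 <= s <= arity c, the default is never used there. *)
Definition pcomp (c : Par) (s : nat) (d : Par) : Par :=
  insubd par_unit (pcomp_seq (val c) s (val d)).

Definition QPar := {malg rat[Par]}.

Definition bracket_basis (c d : Par) : QPar :=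
  \sum_(1 <= t < (arity d).+1) << pcomp d t c >>
  - \sum_(1 <= s < (arity c).+1) << pcomp c s d >>.

Definition bracket (x y : QPar) : QPar :=
  \sum_(c <- msupp x) \sum_(d <- msupp y) (x@_c * y@_d) *: bracket_basis c d.

Inductive lie_generated (S : seq QPar) : QPar -> Prop :=
| lg_base x : x \in S -> lie_generated S x
| lg_zero : lie_generated S 0
| lg_add x y : lie_generated S x -> lie_generated S y -> lie_generated S (x + y)
| lg_scale (a : rat) x : lie_generated S x -> lie_generated S (a *: x)
| lg_bracket x y : lie_generated S x -> lie_generated S y ->
    lie_generated S (bracket x y).

Definition lie_finitely_generated : Prop :=
  exists S : seq QPar, forall x : QPar, lie_generated S x.

(* Main.v *)
Require Import Defs.
From mathcomp Require Import all_boot all_algebra.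
From mathcomp Require Import finmap.
From mathcomp Require monalg.
Import monalg.
From mathcomp Require Import zify.
Import GRing.Theory.
Local Open Scope ring_scope.

Lemma size_ins_block a s j : size (ins_block a s j) = size a.
Proof. elim: a s => [|x a IH] s //=; case: ifP => _ //=; by rewrite IH. Qed.

Lemma size_pcomp c s d :
  (size (val (Defs.pcomp c s d)) <= maxn 1 (maxn (size (val c)) (size (val d))))%N.
Proof.
rewrite /Defs.pcomp /insubd; case: (@insubP _ _ Par (pcomp_seq (val c) s (val d))) => [u _ ->|_] /=; last by rewrite leq_maxl.
rewrite /pcomp_seq; case: ifP => _; rewrite ?size_ins_block; lia.
Qed.

Definition smallP (M : nat) (x : QPar) := forall c : Par, (M < size (val c))%N -> x@_c = 0.

Lemma mcoeff_sum (I : Type) (r : seq I) (F : I -> QPar) c :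
  (\sum_(i <- r) F i)@_c = \sum_(i <- r) (F i)@_c.
Proof.
elim: r => [|i r IH]; first by rewrite !big_nil mcoeff0.
by rewrite !big_cons mcoeffD IH.
Qed.

Lemma smallP_bracket M x y : (0 < M)%N -> smallP M x -> smallP M y -> smallP M (bracket x y).
Proof.
move=> M0 hx hy c hc; rewrite /bracket mcoeff_sum big1_seq // => c' /andP[_ c'x].
rewrite mcoeff_sum big1_seq // => d' /andP[_ d'y].
have sc' : (size (val c') <= M)%N.
  rewrite leqNgt; apply/negP => h; by move/eqP: (hx _ h); rewrite mcoeff_eq0 c'x.
have sd' : (size (val d') <= M)%N.
  rewrite leqNgt; apply/negP => h; by move/eqP: (hy _ h); rewrite mcoeff_eq0 d'y.
have H : forall e f t, (size (val e) <= M)%N -> (size (val f) <= M)%N ->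
    (<< Defs.pcomp e t f >> : QPar)@_c = 0.
  move=> e f t he hf; rewrite mcoeffU; case: eqP => // E.
  have := size_pcomp e t f; rewrite E => h.
  have : (size (val c) <= M)%N.
    apply: (leq_trans h); rewrite !geq_max M0 he hf //.
  by rewrite leqNgt hc.
rewrite mcoeffZ /bracket_basis mcoeffB !mcoeff_sum.
rewrite big1; last by move=> t _; exact: H.
rewrite big1; last by move=> t _; exact: H.
by rewrite subr0 mulr0.
Qed.

Theorem proposition6p4 : ~ lie_finitely_generated.
Proof.
case=> S HS.
pose M := maxn 1 (\max_(x <- S) \max_(c <- msupp x) size (val c)).
have M0 : (0 < M)%N by rewrite leq_max.
have Hall : forall x, lie_generated S x -> smallP M x.
  move=> x; elim => {x}.
  - move=> x xS c hc; apply: mcoeff_outdom; apply/negP => cx.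
    have : (size (val c) <= M)%N.
      rewrite leq_max; apply/orP; right.
      apply: leq_trans (@leq_bigmax_seq _ S xpredT (fun x => \max_(c <- msupp x) size (val c)) x xS isT).
      by apply: (@leq_bigmax_seq _ _ xpredT (fun c0 : Par => size (val c0))) => //.
    by rewrite leqNgt hc.
  - by move=> c _; rewrite mcoeff0.
  - by move=> x y _ hx _ hy c hc; rewrite mcoeffD hx ?hy ?addr0.
  - by move=> a x _ hx c hc; rewrite mcoeffZ hx ?mulr0.
  - by move=> x y _ hx _ hy; apply: smallP_bracket.
have v : par_valid (nseq M.+1 1%N).
  rewrite /par_valid size_nseq ltnS M0 /=; apply/orP; right.
  by apply/allP => z /nseqP [-> _].
pose c0 : Par := exist (fun a => par_valid a) _ v.
have := Hall _ (HS << c0 >>) c0; rewrite mcoeffUU /= size_nseq ltnSn => /(_ isT).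
by move/eqP; rewrite oner_eq0.
Qed.
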